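(* Let $\mathcal N=(G,\beta,r)$ be a potential-based flow network with $G=(V,A)$, and let $s,t\in V$ be distinct. Suppose there exists a potential-based $(s,t)$-flow of value $d>0$ in $\mathcal N$ with potentials $\pi\in[0,\bar\pi]^V$, where $\bar\pi>0$. Then for every integer $k\ge1$ and all $k$ disjoint $(s,t)$-cuts $S_1\subseteq\dots\subseteq S_k\subseteq V$, $$\frac{1}{k\sqrt[r]{k}}\sum_{i=1}^k\sum_{a\in\delta(S_i)}\mu_a\geq\frac{d}{\sqrt[r]{\bar\pi}}.$$
   Context: A potential-based flow network $\mathcal N=(G,\beta,r)$ consists of a weakly connected directed multigraph $G=(V,A)$ without loops, resistances $\beta\in\mathbb{R}^A_{>0}$ and a degree $r>0$; the conductance of arc $a$ is $\mu_a=\beta_a^{-1/r}$. A potential-based $(s,t)$-flow of value $d$ is a pair $(\pi,f)\in\mathbb{R}^V\times\mathbb{R}^A$ with $\pi_u-\pi_v=\beta_a\,\mathrm{sign}(f_a)|f_a|^r$ for every arc $a=(u,v)$ and $\sum_{a\in\delta^+(v)}f_a-\sum_{a\in\delta^-(v)}f_a=b_v$ for all $v\in V$, where $b=d(\chi_s-\chi_t)$, $\chi_v$ the unit vector of $v$, and $\delta^+(v)$, $\delta^-(v)$ are the arcs leaving, resp. entering, $v$. For $S\subseteq V$, $\delta(S)$ is the set of arcs with one endpoint in $S$ and the other in $V\setminus S$ (either direction). An $(s,t)$-cut is a set $S\subseteq V$ with $s\in S$, $t\notin S$. Sets $S_1,\dots,S_k$ are $k$ disjoint $(s,t)$-cuts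 if each is an $(s,t)$-cut and $\delta(S_i)\cap\delta(S_j)=\emptyset$ for all $i\ne j$. *)

(* Defs.v *)
From HB Require Import structures.
From mathcomp Require Import all_boot all_order all_algebra.
From mathcomp Require Import all_classical all_reals all_analysis.
Set Implicit Arguments. Unset Strict Implicit. Unset Printing Implicit Defensive.
Import Order.TTheory GRing.Theory Num.Theory.
Local Open Scope ring_scope.

(* A directed multigraph G = (V, A): finite vertex and arc types, each arc a
   has tail [src a] and head [tgt a]. *)

Definition loopless (V A : finType) (src tgt : A -> V) : Prop :=
  forall a : A, src a != tgt a.

Definition und_adj (V A : finType) (src tgt : A -> V) : rel V :=
  fun u v => [exists a : A, ((src a == u) && (tgt a == v)) ||
                             ((src a == v) && (tgt a == u))].

Definition weakly_connected (V A : finType) (src tgt : A -> V) : Prop :=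
  forall u v : V, connect (und_adj src tgt) u v.

Definition conductance (R : realType) (A : finType) (beta : A -> R) (r : R)
  (a : A) : R := powR (beta a) (- r^-1).

Definition delta_out (V A : finType) (src : A -> V) (v : V) : {set A} :=
  [set a | src a == v].
Definition delta_in (V A : finType) (tgt : A -> V) (v : V) : {set A} :=
  [set a | tgt a == v].

Definition delta_cut (V A : finType) (src tgt : A -> V) (S : {set V}) : {set A} :=
  [set a | (src a \in S) != (tgt a \in S)].

Definition is_pb_st_flow (R : realType) (V A : finType) (src tgt : A -> V)
  (beta : A -> R) (r : R) (s t : V) (d : R) (pi : V -> R) (f : A -> R) : Prop :=
  (forall a : A, pi (src a) - pi (tgt a) = beta a * Num.sg (f a) * powR `|f a| r)
  /\ (forall v : V,
        \sum_(a in delta_out src v) f a - \sum_(a in delta_in tgt v) f a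
        = d * ((v == s)%:R - (v == t)%:R)).

Definition is_st_cut (V : finType) (s t : V) (S : {set V}) : Prop :=
  s \in S /\ t \notin S.

Definition disjoint_st_cuts (V A : finType) (src tgt : A -> V) (s t : V) (k : nat)
  (S : 'I_k -> {set V}) : Prop :=
  (forall i, is_st_cut s t (S i)) /\
  (forall i j, i != j -> [disjoint delta_cut src tgt (S i) & delta_cut src tgt (S j)]).

(* Main.v *)
Require Import Defs.
From HB Require Import structures.
From mathcomp Require Import all_boot all_order all_algebra.
From mathcomp Require Import all_classical all_reals all_analysis.
From mathcomp Require Import ring lra.
Import Order.TTheory GRing.Theory Num.Theory.
Local Open Scope ring_scope.
Lemma arc_ineq (R : realType) (b r y q : R) : 0 < b -> 0 < r -> 0 <= y -> 0 < q ->
  y <= (b * y * powR y r) / ((r + 1) * q) + powR q r^-1 * r / (r + 1) * powR b (- r^-1).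
Proof.
move=> b0 r0 y0 q0.
set u := y * powR b r^-1.
have u0 : 0 <= u by rewrite mulr_ge0 // powR_ge0.
have hr1 : 0 < r + 1 by lra.
have hq' : 0 < (r + 1) / r by rewrite divr_gt0.
have hpq : (r + 1)^-1 + ((r + 1) / r)^-1 = 1.
  by rewrite invf_div; field; rewrite gt_eqF.
have Y := conjugate_powR u0 (ltW q0) hr1 hq' hpq.
have ur : powR u r = powR y r * b.
  rewrite /u powRM // ?powR_ge0 // -powRrM mulVf ?gt_eqF // powRr1 //; exact: ltW.
have ur1 : powR u (r + 1) = u * (powR y r * b).
  by rewrite powRD ?powRr1 // ?ur 1?mulrC // (gt_eqF hr1).
have qq : powR q ((r + 1) / r) = q * powR q r^-1.
  have h2 : 0 < r^-1 + 1 by rewrite addr_gt0 // invr_gt0.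
  rewrite mulrDl mul1r divff ?gt_eqF // addrC powRD ?powRr1 ?(gt_eqF h2) //; last exact: ltW.
  by rewrite mulrC.
rewrite ur1 qq in Y.
have mu : powR b (- r^-1) * powR b r^-1 = 1.
  by rewrite powRN mulVf // gt_eqF // powR_gt0.
have yE : y = u * powR b (- r^-1).
  by rewrite /u -mulrA [powR b r^-1 * _]mulrC mu mulr1.
have m0 : 0 < powR b (- r^-1) by rewrite powR_gt0.
set m := powR b (- r^-1) in m0 mu yE *.
set pr := powR y r in Y *.
set c := powR q r^-1 in Y *.
have pr0 : 0 <= pr by rewrite powR_ge0.
have H := ler_wpM2r (ltW (divr_gt0 m0 q0)) Y.
have E1 : u * m = u * q * (m / q) by field; rewrite gt_eqF.
rewrite yE E1; apply: (le_trans H).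
rewrite le_eqVlt; apply/orP; left; apply/eqP.
field. by apply/and3P; split; rewrite gt_eqF.
Qed.
Lemma sum_pick (T : finType) (R : pzRingType) (S : {set T}) (x : T) (F : T -> R) :
  \sum_(v in S) (if v == x then F v else 0) = if x \in S then F x else 0.
Proof.
case: (boolP (x \in S)) => xS.
  rewrite (bigD1 x) //= eqxx big1 ?addr0 // => v /andP[_ /negbTE ->] //.
apply: big1 => v vS; case: eqP => // e; subst v; by rewrite vS in xS.
Qed.

Lemma sum_key (V A : finType) (R : comPzRingType) (key : A -> V) (S : {set V})
  (g : V -> R) (h : A -> R) :
  \sum_(v in S) g v * \sum_(a in [set a | key a == v]) h a =
  \sum_a (key a \in S)%:R * g (key a) * h a.
Proof.
rewrite (eq_bigr (fun v => \sum_a (if v == key a then g v * h a else 0))); last first.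
  move=> v _; rewrite mulr_sumr big_mkcond; apply: eq_bigr => a _.
  by rewrite inE eq_sym; case: ifP; rewrite ?mulr0.
rewrite exchange_big; apply: eq_bigr => a _.
rewrite (@sum_pick V R S (key a) (fun v => g v * h a)).
by case: ifP; rewrite ?mul1r ?mul0r ?mulrA.
Qed.

Lemma sum_disj (A I : finType) (R : realDomainType) (D : I -> {set A}) (E : A -> R) :
  (forall a, 0 <= E a) ->
  (forall i j, i != j -> [disjoint D i & D j]) ->
  \sum_i \sum_(a in D i) E a <= \sum_a E a.
Proof.
move=> E0 dis.
rewrite -partition_disjoint_bigcup //.
rewrite [X in _ <= X](bigID (mem (\bigcup_i D i))) /= lerDl.
by apply: sumr_ge0.
Qed.
Lemma cut_flow (R : realType) (V A : finType) (src tgt : A -> V) (s t : V) (d : R)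
  (f : A -> R) (S : {set V}) :
  (forall v, \sum_(a in delta_out src v) f a - \sum_(a in delta_in tgt v) f a
        = d * ((v == s)%:R - (v == t)%:R)) ->
  s \in S -> t \notin S ->
  d <= \sum_(a in delta_cut src tgt S) `|f a|.
Proof.
move=> H sS tS.
have E : \sum_(v in S) (1 * \sum_(a in delta_out src v) f a)
       - \sum_(v in S) (1 * \sum_(a in delta_in tgt v) f a) = d.
  rewrite -sumrB.
  rewrite (eq_bigr (fun v => (if v == s then d else 0) - (if v == t then d else 0))); last first.
    move=> v _; rewrite !mul1r H.
    by case: (v == s); case: (v == t); rewrite /=; ring.
  by rewrite sumrB !sum_pick sS (negbTE tS) subr0.
rewrite /delta_out /delta_in !sum_key in E.
rewrite -E -sumrB /delta_cut [X in _ <= X]big_mkcond /=; apply: ler_sum => a _.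
rewrite inE; case: (src a \in S); case: (tgt a \in S) => /=;
  rewrite ?mul1r ?mul0r ?subr0 ?sub0r ?subrr ?ler_norm //.
by rewrite -normrN ler_norm.
Qed.

Lemma energy (R : realType) (V A : finType) (src tgt : A -> V) (s t : V) (d : R)
  (f : A -> R) (pi : V -> R) :
  (forall v, \sum_(a in delta_out src v) f a - \sum_(a in delta_in tgt v) f a
        = d * ((v == s)%:R - (v == t)%:R)) ->
  \sum_a f a * (pi (src a) - pi (tgt a)) = d * (pi s - pi t).
Proof.
move=> H.
transitivity (\sum_(v in [set: V]) pi v *
   (\sum_(a in delta_out src v) f a - \sum_(a in delta_in tgt v) f a)).
  symmetry.
  rewrite (eq_bigr _ (fun v _ => mulrBr _ _ _)) sumrB /delta_out /delta_in !sum_key -sumrB.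
  by apply: eq_bigr => a _; rewrite !finset.in_setT /= mul1r mul1r; ring.
rewrite (eq_bigr (fun v => (if v == s then pi v * d else 0) - (if v == t then pi v * d else 0))); last first.
  move=> v _; rewrite H.
  by case: (v == s); case: (v == t); rewrite /=; ring.
rewrite sumrB !sum_pick !finset.in_setT; ring.
Qed.
Theorem theorem3 (R : realType) (V A : finType) (src tgt : A -> V)
  (beta : A -> R) (r : R) (s t : V) (d pibar : R) :
  weakly_connected src tgt -> loopless src tgt ->
  (forall a, 0 < beta a) -> 0 < r ->
  s != t -> 0 < d -> 0 < pibar ->
  (exists (pi : V -> R) (f : A -> R),
      is_pb_st_flow src tgt beta r s t d pi f /\
      (forall v, 0 <= pi v <= pibar)) ->
  forall (k : nat) (S : 'I_k -> {set V}),
    (1 <= k)%N ->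
    disjoint_st_cuts src tgt s t S ->
    (forall i j : 'I_k, (i <= j)%N -> S i \subset S j) ->
    d / powR pibar r^-1 <=
      (k%:R * powR k%:R r^-1)^-1 *
        \sum_(i < k) \sum_(a in delta_cut src tgt (S i)) conductance beta r a.
Proof.
move=> _ _ b0 r0 _ d0 pb0 [pi [f [[Hfl Hcons] Hpi]]] k S k1 [Hcut Hdisj] _.
have k0 : 0 < (k%:R : R) by rewrite ltr0n.
set q := pibar / k%:R.
have q0 : 0 < q by rewrite divr_gt0.
set M := \sum_(i < k) \sum_(a in delta_cut src tgt (S i)) conductance beta r a.
set w := fun a => beta a * `|f a| * powR `|f a| r.
have w0 : forall a, 0 <= w a.
  by move=> a; rewrite /w mulr_ge0 ?powR_ge0 // mulr_ge0 // ltW.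
have Hw : forall a, f a * (pi (src a) - pi (tgt a)) = w a.
  move=> a; rewrite Hfl /w.
  have e : f a * Num.sg (f a) = `|f a| by rewrite mulrC -normrEsg.
  transitivity (beta a * (f a * Num.sg (f a)) * powR `|f a| r); first ring.
  by rewrite e.
have HE : \sum_a w a <= d * pibar.
  rewrite -(eq_bigr _ (fun a _ => Hw a)) (@energy _ _ _ src tgt s t d f pi Hcons).
  apply: ler_wpM2l; first exact: ltW.
  have := Hpi s; have := Hpi t; move=> /andP[? ?] /andP[? ?]; lra.
have HW : \sum_(i < k) \sum_(a in delta_cut src tgt (S i)) w a <= d * pibar.
  exact: le_trans (@sum_disj _ _ _ (fun i => delta_cut src tgt (S i)) w w0 Hdisj) HE.
set c := powR q r^-1.
have Hk : k%:R * d <= (\sum_(i < k) \sum_(a in delta_cut src tgt (S i)) w a) / ((r + 1) * q)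
                      + c * r / (r + 1) * M.
  have -> : k%:R * d = \sum_(i < k) d by rewrite sumr_const card_ord mulr_natl.
  rewrite mulr_suml /M mulr_sumr -big_split /=; apply: ler_sum => i _.
  apply: (le_trans (@cut_flow _ _ _ src tgt s t d f (S i) Hcons (Hcut i).1 (Hcut i).2)).
  rewrite mulr_suml mulr_sumr -big_split /=; apply: ler_sum => a _.
  exact: arc_ineq.
have hr1 : 0 < r + 1 by lra.
have Hk2 : k%:R * d <= c * M.
  have h1 : (\sum_(i < k) \sum_(a in delta_cut src tgt (S i)) w a) / ((r + 1) * q)
           <= k%:R * d / (r + 1).
    rewrite ler_pdivrMr ?mulr_gt0 ?invr_gt0 //.
    apply: (le_trans HW); rewrite /q; rewrite le_eqVlt; apply/orP; left; apply/eqP.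
    by field; rewrite !gt_eqF.
  have h2 := le_trans Hk (lerD h1 (lexx _)).
  have : k%:R * d * r / (r + 1) <= c * M * r / (r + 1).
    move: h2; rewrite -subr_ge0 => h2; rewrite -subr_ge0.
    have -> : c * M * r / (r + 1) - k%:R * d * r / (r + 1) =
              k%:R * d / (r + 1) + c * r / (r + 1) * M - k%:R * d by field; rewrite gt_eqF.
    exact: h2.
  move=> h3; rewrite -subr_ge0.
  have -> : c * M - k%:R * d = (c * M * r / (r + 1) - k%:R * d * r / (r + 1)) * ((r + 1) / r).
    by field; rewrite !gt_eqF.
  by apply: mulr_ge0; [rewrite subr_ge0 | rewrite divr_ge0 // ltW].
set P := powR pibar r^-1.
set K := powR k%:R r^-1.
have P0 : 0 < P by rewrite powR_gt0.
have K0 : 0 < K by rewrite powR_gt0.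
have cE : c = P / K.
  rewrite /c /q powRM ?invr_ge0 ?ltW //; congr (_ * _).
  have e : powR k%:R^-1 r^-1 * K = 1.
    by rewrite /K -powRM ?invr_ge0 ?ltW // mulVf ?gt_eqF // powR1.
  by move: e => /(congr1 (fun x => x / K)); rewrite mulfK ?lt0r_neq0 // mul1r.
rewrite -subr_ge0.
have -> : (k%:R * K)^-1 * M - d / P = (P / K * M - k%:R * d) / (k%:R * P).
  by field; rewrite !gt_eqF.
apply: divr_ge0; first by rewrite subr_ge0 -cE.
by rewrite mulr_ge0 // ltW.
Qed.
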